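(* For every positive integer $k$, any deterministic distributed algorithm in the LOCAL model that finds a proper $4$-coloring of $G_k$ (for every assignment of unique identifiers to its vertices) requires at least $k=\frac{1}{8}(|V(G_k)|-2)$ rounds.
   Context: The planar graphs $G_k$ are defined inductively. $G_0$ has vertex set $\{v_{(0,1)},v_{(0,2)}\}$ and the single edge $\{v_{(0,1)},v_{(0,2)}\}$. For $i\ge 1$, $G_i$ is obtained from $G_{i-1}$ by adding, for each $j\in\{1,2\}$, four new vertices $a_{(i,j)},b_{(i,j)},c_{(i,j)},v_{(i,j)}$ and the edges $\{a_{(i,j)},b_{(i,j)}\},\{b_{(i,j)},c_{(i,j)}\},\{c_{(i,j)},a_{(i,j)}\}$, $\{a_{(i,j)},v_{(i,j)}\},\{b_{(i,j)},v_{(i,j)}\},\{c_{(i,j)},v_{(i,j)}\}$, $\{a_{(i,j)},v_{(i-1,j)}\},\{b_{(i,j)},v_{(i-1,j)}\},\{c_{(i,j)},v_{(i-1,j)}\}$. LOCAL model: the network is the graph, each vertex has a unique identifier, and in synchronous rounds each vertex receives the previous round's messages, computes arbitrarily and sends messages of unbounded size to its neighbors; at the end each vertex outputs its color. A proper $4$-coloring assigns colors in $\{1,2,3,4\}$ with adjacent vertices colored differently. *)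

(* Defs.v *)
From mathcomp Require Import all_boot.
Set Implicit Arguments. Unset Strict Implicit. Unset Printing Implicit Defensive.

(* Vertices: inl j           = v_(0,j+1)               (j : 'I_2)      *)
(*           inr (i, j, l)   = layer (i+1), side (j+1), where          *)
(*                             l = 0,1,2 stand for a,b,c and l = 3     *)
(*                             stands for v_(i+1, j+1).                *)
Definition GV (k : nat) : finType := ('I_2 + 'I_k * 'I_2 * 'I_4)%type.

(* [is_v x i j] : x is the vertex v_(i, j) (i a layer number 0..k). *)
Definition is_v k (x : GV k) (i : nat) (j : 'I_2) : bool :=
  match x with
  | inl j' => (i == 0) && (j' == j)
  | inr (i', j', l) => (i == (nat_of_ord i').+1) && (j' == j) && (nat_of_ord l == 3)
  end.

(* Edges of the layer-(i+1) gadget, oriented towards the gadget vertex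
   y = a/b/c_(i+1,j): y is adjacent to the other two triangle vertices,
   to v_(i+1,j) and to v_(i,j). *)
Definition gadget_edge k (x y : GV k) : bool :=
  match y with
  | inl _ => false
  | inr (i, j, l) =>
      (nat_of_ord l < 3) &&
      [|| is_v x i j, is_v x i.+1 j
        | match x with
          | inl _ => false
          | inr (i', j', l') =>
              (i' == i) && (j' == j) && (nat_of_ord l' < 3) && (l' != l)
          end]
  end.

Definition base_edge k (x y : GV k) : bool :=
  match x, y with
  | inl j, inl j' => j != j'
  | _, _ => false
  end.

Definition Gadj k (x y : GV k) : bool :=
  [|| base_edge x y, gadget_edge x y | gadget_edge y x].

Definition degree k (v : GV k) : nat := #|[pred u | Gadj v u]|.

(* Proper 4-colouring (colours 'I_4, i.e. {0,1,2,3} standing for {1,2,3,4}). *)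
Definition proper_4coloring k (c : GV k -> 'I_4) : Prop :=
  forall x y : GV k, Gadj x y -> c x <> c y.

(* Deterministic LOCAL algorithms (full-information form).             *)
(* A vertex starts in state [init id deg] from its identifier and its  *)
(* degree; in every round each vertex sends its whole current state to *)
(* all neighbours (messages of unbounded size), and updates its state  *)
(* by an arbitrary function [step] of its own state and of the set of *)
(* states received.  After the last round it outputs [out state].      *)
Fixpoint run (S : Type) (init : nat -> nat -> S) (step : S -> (S -> Prop) -> S)
    k (id : GV k -> nat) (t : nat) (v : GV k) : S :=
  match t with
  | 0 => init (id v) (degree v)
  | t'.+1 =>
      step (run init step id t' v)
           (fun s => exists u, Gadj v u /\ run init step id t' u = s)
  end.

(* Main.v *)
Require Import Defs.
From mathcomp Require Import all_boot.
From mathcomp Require Import zify.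
From Stdlib Require Import FunctionalExtensionality PropExtensionality.

Set Implicit Arguments. Unset Strict Implicit.
Section G.
Variable k : nat.

Definition flip (j : 'I_2) : 'I_2 := if j == ord0 then @Ordinal 2 1 isT else ord0.
Lemma flipK : involutive flip.
Proof. by case=> [[|[|]] ?] //; apply/val_inj. Qed.
Lemma flip_inj : injective flip. Proof. exact: inv_inj flipK. Qed.

Definition sw (x : GV k) : GV k :=
  match x with
  | inl j => inl (flip j)
  | inr (i, j, l) => inr (i, flip j, l)
  end.
Lemma swK : involutive sw.
Proof. by case=> [j|[[i j] l]] /=; rewrite flipK. Qed.
Lemma sw_inj : injective sw. Proof. exact: inv_inj swK. Qed.

Lemma is_v_sw x i j : is_v (sw x) i (flip j) = is_v x i j.
Proof. by case: x => [j'|[[i' j'] l']] /=; rewrite (inj_eq flip_inj). Qed.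

Lemma Gadj_sw x y : Gadj (sw x) (sw y) = Gadj x y.
Proof.
rewrite /Gadj /base_edge /gadget_edge.
case: x => [j'|[[i' j'] l']]; case: y => [j|[[i j] l]] /=;
 rewrite ?is_v_sw ?(inj_eq flip_inj) //.
Qed.

Lemma degree_sw v : degree (sw v) = degree v.
Proof.
rewrite /degree.
have -> : #|[pred u | Gadj (sw v) u]| = #|[preim sw of [pred u | Gadj v u]]|.
  apply: eq_card => u; rewrite !inE -{1}[u]swK Gadj_sw //.
rewrite card_preim; last exact: sw_inj.
apply: eq_card => u; rewrite !inE.
have -> : u \in codom sw by rewrite -[u]swK codom_f.
by [].
Qed.

Lemma run_sw S init step (id : GV k -> nat) t v :
  @run S init step k (fun x => id (sw x)) t v = run init step id t (sw v).
Proof.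
elim: t v => [|t IH] v /=; first by rewrite degree_sw.
rewrite IH; congr (step _ _).
apply: functional_extensionality => s; apply: propositional_extensionality.
split=> [[u [hu <-]]|[u [hu <-]]].
  by exists (sw u); rewrite Gadj_sw IH.
by exists (sw u); rewrite -{1}[v]swK Gadj_sw IH swK.
Qed.

Fixpoint ball (t : nat) (v w : GV k) : Prop :=
  match t with
  | 0 => w = v
  | t'.+1 => w = v \/ exists u, Gadj v u /\ ball t' u w
  end.

Lemma ball_refl t v : ball t v v.
Proof. by case: t => [|t] /=; [|left]. Qed.

Lemma ball_S t v w : ball t v w -> ball t.+1 v w.
Proof.
elim: t v => [|t IH] v /=; first by left.
case=> [->|[u [hu hb]]]; first by left.
by right; exists u; split => //; apply: IH.
Qed.

Lemma run_loc S init step (id id' : GV k -> nat) t v :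
  (forall w, ball t v w -> id w = id' w) ->
  @run S init step k id t v = run init step id' t v.
Proof.
elim: t v => [|t IH] v H /=; first by rewrite H.
rewrite IH; last by move=> w hw; apply: H; apply: ball_S.
congr (step _ _).
apply: functional_extensionality => s; apply: propositional_extensionality.
split=> [[u [hu <-]]|[u [hu <-]]]; exists u; split => //.
  by symmetry; apply: IH => w hw; apply: H; right; exists u.
by apply: IH => w hw; apply: H; right; exists u.
Qed.

Definition h (x : GV k) : nat :=
  match x with
  | inl _ => 0
  | inr (i, _, l) => if nat_of_ord l == 3 then (2 * i).+2 else (2 * i).+1
  end.

Definition side (x : GV k) : 'I_2 :=
  match x with
  | inl j => j
  | inr (_, j, _) => j
  end.

Lemma gadget_h x y : gadget_edge x y ->
  side x = side y /\ h x <= (h y).+1 /\ h y <= (h x).+1.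
Proof.
rewrite /gadget_edge /is_v.
case: y => [//|[[i j] l]] /andP [hl].
case: x => [j'|[[i' j'] l']] /=.
  rewrite orbF; case/andP => /eqP hi /eqP -> /=.
  rewrite (_ : (nat_of_ord l == 3) = false); last by apply/eqP; lia.
  by split => //; lia.
rewrite (_ : (nat_of_ord l == 3) = false); last by apply/eqP; lia.
case/or3P.
- case/andP => /andP [/eqP hi /eqP ->] /eqP ->; split => //=; lia.
- case/andP => /andP [/eqP hi /eqP ->] /eqP ->; split => //=; lia.
- case/andP => /andP [/andP [/eqP -> /eqP ->] hl'] _; split => //.
  rewrite (_ : (nat_of_ord l' == 3) = false); last by apply/eqP; lia.
  lia.
Qed.

Lemma Gadj_h x y : Gadj x y -> h x <= (h y).+1 /\ (0 < h x -> side y = side x).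
Proof.
rewrite /Gadj; case/or3P.
- by case: x => // j; case: y.
- by move/gadget_h => [-> [? ?]].
- by move/gadget_h => [-> [? ?]].
Qed.

Lemma ball_h t v w : ball t v w -> h v <= h w + t.
Proof.
elim: t v => [|t IH] v /=; first by move=> ->; rewrite addn0.
case=> [->|[u [hu hb]]]; first by lia.
have [h1 _] := Gadj_h hu; have := IH _ hb; lia.
Qed.

Lemma ball_side t v w : ball t v w -> t < h v -> side w = side v.
Proof.
elim: t v => [|t IH] v /=; first by move=> ->.
case=> [->|[u [hu hb]]] // ht.
have [h1 h2] := Gadj_h hu.
rewrite (IH u) //; last by lia.
by apply: h2; lia.
Qed.


Lemma nat_pig (a b c w w' : nat) : a <> b -> a <> c -> b <> c -> w <> a -> w <> b -> w <> c -> w' <> a -> w' <> b -> w' <> c -> a < 4 -> b < 4 -> c < 4 -> w < 4 -> w' < 4 -> w = w'.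
Proof. lia. Qed.

Lemma I4_pig (a b c w w' : 'I_4) : a <> b -> a <> c -> b <> c ->
  w <> a -> w <> b -> w <> c -> w' <> a -> w' <> b -> w' <> c -> w = w'.
Proof.
move=> h1 h2 h3 h4 h5 h6 h7 h8 h9; apply: val_inj.
have ne : forall x y : 'I_4, x <> y -> val x <> val y.
  by move=> x y nxy exy; apply: nxy; apply: val_inj.
exact: (nat_pig (ne _ _ h1) (ne _ _ h2) (ne _ _ h3) (ne _ _ h4) (ne _ _ h5) (ne _ _ h6)
  (ne _ _ h7) (ne _ _ h8) (ne _ _ h9) (ltn_ord a) (ltn_ord b) (ltn_ord c)
  (ltn_ord w) (ltn_ord w')).
Qed.

Definition o4 (n : nat) (hn : n < 4) : 'I_4 := Ordinal hn.

Section Col.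
Variable c : GV k -> 'I_4.
Hypothesis Hc : proper_4coloring c.

Lemma gadget_eq (i : 'I_k) j x : is_v x i j -> c x = c (inr (i, j, @o4 3 isT)).
Proof.
move=> hx.
have A : forall l : 'I_4, l < 3 -> Gadj x (inr (i, j, l)).
  move=> l hl; rewrite /Gadj /gadget_edge /= hl hx /=; by rewrite orbT.
have B : forall l : 'I_4, l < 3 -> Gadj (inr (i, j, @o4 3 isT)) (inr (i, j, l)).
  move=> l hl; rewrite /Gadj /gadget_edge /= hl /=; by rewrite !eqxx /= orbT.
have C : forall l l' : 'I_4, l < 3 -> l' < 3 -> l != l' ->
    Gadj (inr (i, j, l)) (inr (i, j, l')).
  move=> l l' hl hl' hne; rewrite /Gadj /gadget_edge /= hl' /= !eqxx hl /=.
  by rewrite eq_sym hne !orbT.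
apply: (@I4_pig (c (inr (i, j, @o4 0 isT))) (c (inr (i, j, @o4 1 isT)))
                (c (inr (i, j, @o4 2 isT)))).
- exact: (Hc (C (@o4 0 isT) (@o4 1 isT) isT isT isT)).
- exact: (Hc (C (@o4 0 isT) (@o4 2 isT) isT isT isT)).
- exact: (Hc (C (@o4 1 isT) (@o4 2 isT) isT isT isT)).
- exact: (Hc (A (@o4 0 isT) isT)).
- exact: (Hc (A (@o4 1 isT) isT)).
- exact: (Hc (A (@o4 2 isT) isT)).
- exact: (Hc (B (@o4 0 isT) isT)).
- exact: (Hc (B (@o4 1 isT) isT)).
- exact: (Hc (B (@o4 2 isT) isT)).
Qed.

Lemma chain (i : 'I_k) j : c (inr (i, j, @o4 3 isT)) = c (inl j).
Proof.
case: i => m; elim: m => [|m IH] hm.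
  by symmetry; apply: gadget_eq => /=; rewrite !eqxx.
have hm' : m < k by apply: ltn_trans hm.
rewrite -(IH hm'); symmetry; apply: gadget_eq => /=; rewrite !eqxx. by [].
Qed.

End Col.

End G.

Lemma card_GV k : #|GV k| = 2 + k * 8.
Proof. rewrite /GV card_sum !card_prod !card_ord; lia. Qed.

Theorem lemma6p5 (k : nat) (hk : 0 < k)
    (S : Type) (init : nat -> nat -> S) (step : S -> (S -> Prop) -> S)
    (out : S -> 'I_4) (r : nat) :
  (forall id : GV k -> nat, injective id ->
     proper_4coloring (fun v => out (run init step id r v))) ->
  k <= r /\ k = (#|GV k| - 2) %/ 8.
Proof.
move=> H; split; last by rewrite card_GV addKn mulnK.
rewrite leqNgt; apply/negP => hr.
set M := #|GV k|.
pose rk (x : GV k) : nat := enum_rank x.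
pose idab (a b : nat) (x : GV k) :=
  if val (side x) == 0 then a * M + rk x else b * M + rk (sw x).
have hM : 0 < M by rewrite /M card_GV.
have rkM : forall x, rk x < M by move=> x; exact: ltn_ord.
have divE : forall a x, (a * M + rk x) %/ M = a.
  by move=> a x; rewrite divnMDl // divn_small // addn0.
have side_sw : forall x : GV k, (val (side (sw x)) == 0) = ~~ (val (side x) == 0).
  by case=> [j|[[i j] l]]; case: j => [[|[|]] ?].
have inj : forall a b, a != b -> injective (idab a b).
  move=> a b hab x y; rewrite /idab.
  case: (boolP (val (side x) == 0)) => sx; case: (boolP (val (side y) == 0)) => sy e.
  - by apply: enum_rank_inj; apply: val_inj; exact: addnI e.
  - by have := congr1 (divn^~ M) e; rewrite !divE => eab; rewrite eab eqxx in hab.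
  - by have := congr1 (divn^~ M) e; rewrite !divE => eab; rewrite eab eqxx in hab.
  - by apply: sw_inj; apply: enum_rank_inj; apply: val_inj; exact: addnI e.
have hk1 : k.-1 < k by lia.
pose v1 : GV k := inr (Ordinal hk1, ord0, @o4 3 isT).
have hv1 : h v1 = 2 * k by rewrite /h /= ; lia.
have bside : forall w, ball r v1 w -> val (side w) == 0.
  move=> w /ball_side -> //; rewrite hv1; lia.
pose col a := out (run init step (idab a 0) r v1).
have c1 : forall a b, out (run init step (idab a b) r v1) = col a.
  move=> a b; congr out; apply: run_loc => w /bside sw0; by rewrite /idab sw0.
have c2 : forall a b, out (run init step (idab a b) r (sw v1)) = col b.
  move=> a b; rewrite -(run_sw init step (idab a b)); congr out.
  apply: run_loc => w /bside sw0; by rewrite /idab side_sw sw0 swK /=.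
have neq : forall a b, a != b -> col a <> col b.
  move=> a b hab; rewrite -(c1 a b) -(c2 a b).
  have P := H _ (inj a b hab).
  have e1 := chain P (Ordinal hk1) ord0.
  have e2 := chain P (Ordinal hk1) (flip ord0).
  have -> : sw v1 = inr (Ordinal hk1, flip ord0, @o4 3 isT) by [].
  rewrite /v1 e1 e2; apply: P; by [].
have injf : injective (fun i : 'I_5 => col i).
  move=> a b e; apply: val_inj; case: (eqVneq (val a) (val b)) => // hne.
  by case: (neq _ _ hne).
by have := @leq_card _ _ _ injf; rewrite !card_ord.
Qed.
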